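(* Let $m\ge 1$, $C>0$, let $\mathbf{y}\in\{-1,1\}^m$, let $\mathbf{Q}\in\mathbb{R}^{m\times m}$ be a symmetric positive semidefinite kernel matrix on the labeled nodes and let $Q_{t1},\dots,Q_{tm}\in\mathbb{R}$ be the kernel values between a test node $t$ and the labeled nodes. Let $\boldsymbol{\alpha}^*\in\mathcal{S}(\mathbf{y})$ and $\hat p_t=\sum_{i=1}^m y_i\alpha_i^*Q_{ti}$, and assume $\hat p_t\neq 0$. For $i\in[m]$ set $M_{u_i}=\sum_{j=1}^m C|Q_{ij}|-1$ and $M_{v_i}=\sum_{j=1}^m C|Q_{ij}|+1$. Consider the mixed-integer linear program $$P(\mathbf{y}):\ \min\ \operatorname{sign}(\hat p_t)\sum_{i=1}^m z_iQ_{ti}$$ over $\boldsymbol{\alpha},\tilde{\mathbf{y}},\mathbf{z},\mathbf{u},\mathbf{v}\in\mathbb{R}^m$, $\mathbf{y}',\mathbf{s},\mathbf{t}\in\{0,1\}^m$, $\mathbf{R}\in\mathbb{R}^{m\times m}$, subject to: $\sum_{i=1}^m(1-y_i\tilde y_i)\le 2\lfloor\epsilon m\rfloor$; and for all $i,j\in[m]$: $\tilde y_i=2y'_i-1$; $\sum_{j=1}^m R_{ij}Q_{ij}-1-u_i+v_i=0$; $u_i\ge0$, $v_i\ge 0$; $-C(1+\tilde y_i)\le R_{ij}+z_j\le C(1+\tilde y_i)$; $-C(1-\tilde y_i)\le R_{ij}-z_j\le C(1-\tilde y_i)$; $-\alpha_i\le z_i\le\alpha_i$; $\alpha_i-C(1-\tilde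 y_i)\le z_i\le C(1+\tilde y_i)-\alpha_i$; $u_i\le M_{u_i}s_i$; $\alpha_i\le C(1-s_i)$; $v_i\le M_{v_i}t_i$; $\alpha_i\ge Ct_i$. Then the prediction for node $t$ is certifiably robust against $\mathcal{A}(\mathbf{y})$ if the optimal value of $P(\mathbf{y})$ is greater than zero, and it is not certifiably robust otherwise. Equivalently, the optimal value of $P(\mathbf{y})$ equals $\min\{\operatorname{sign}(\hat p_t)\sum_{i=1}^m\tilde y_i\alpha_iQ_{ti} : \tilde{\mathbf{y}}\in\mathcal{A}(\mathbf{y}),\ \boldsymbol{\alpha}\in\mathcal{S}(\tilde{\mathbf{y}})\}$.
   Context: Binary classification with $m$ labeled nodes. For a label vector $\tilde{\mathbf{y}}\in\{-1,1\}^m$, the (bias-free) kernel SVM dual problem is $D(\tilde{\mathbf{y}}):\ \min_{\boldsymbol\alpha\in\mathbb{R}^m}-\sum_{i=1}^m\alpha_i+\tfrac12\sum_{i,j=1}^m\tilde y_i\tilde y_j\alpha_i\alpha_jQ_{ij}$ subject to $0\le\alpha_i\le C$ for all $i\in[m]$; $\mathcal{S}(\tilde{\mathbf{y}})$ denotes its set of optimal solutions. Given $\boldsymbol\alpha\in\mathcal{S}(\tilde{\mathbf{y}})$, the SVM's prediction score for a node $t$ is $p_t=\sum_{i=1}^m\tilde y_i\alpha_iQ_{ti}$ and its predicted class is $\operatorname{sign}(p_t)$. The adversary with budget $\epsilon\in[0,1]$ may choose any $\tilde{\mathbf{y}}\in\mathcal{A}(\mathbf{y})=\{\tilde{\mathbf{y}}\in\{-1,1\}^m:\|\tilde{\mathbf{y}}-\mathbf{y}\|_0\le\lfloor\epsilon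 m\rfloor\}$. The prediction for $t$ is certifiably robust if $\operatorname{sign}(\hat p_t)\,p_t>0$ for every $\tilde{\mathbf{y}}\in\mathcal{A}(\mathbf{y})$ and every $\boldsymbol\alpha\in\mathcal{S}(\tilde{\mathbf{y}})$ (a score of $0$ counts as a changed prediction). When $\mathbf{Q}$ is the neural tangent kernel of a network, this SVM coincides with the infinite-width network trained with soft-margin (hinge) loss and regularization constant $C$. *)

(* Defs.v *)
From HB Require Import structures.
From mathcomp Require Import all_boot all_order all_algebra.
From mathcomp Require Import reals.
Set Implicit Arguments. Unset Strict Implicit. Unset Printing Implicit Defensive.
Import Order.TTheory GRing.Theory Num.Theory.
Local Open Scope ring_scope.

Section Defs.
Variable R : realType.
Variable m : nat.

Definition is_label (y : 'I_m -> R) : Prop := forall i, y i = 1 \/ y i = -1.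

Definition is_binary (b : 'I_m -> R) : Prop := forall i, b i = 0 \/ b i = 1.

Definition sym_psd (Q : 'M[R]_m) : Prop :=
  (forall i j, Q i j = Q j i) /\
  (forall x : 'I_m -> R, 0 <= \sum_i \sum_j x i * x j * Q i j).

(* Dual objective of the bias-free kernel SVM D(yt). *)
Definition dual_obj (Q : 'M[R]_m) (yt a : 'I_m -> R) : R :=
  - (\sum_i a i) + 2^-1 * \sum_i \sum_j yt i * yt j * a i * a j * Q i j.

Definition dual_feasible (C : R) (a : 'I_m -> R) : Prop :=
  forall i, 0 <= a i <= C.

Definition svm_opt (C : R) (Q : 'M[R]_m) (yt a : 'I_m -> R) : Prop :=
  dual_feasible C a /\
  forall b, dual_feasible C b -> dual_obj Q yt a <= dual_obj Q yt b.

Definition score (qt yt a : 'I_m -> R) : R := \sum_i yt i * a i * qt i.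

Definition budget (eps : R) : int := Num.floor (eps * m%:R).

Definition admissible (eps : R) (y yt : 'I_m -> R) : Prop :=
  is_label yt /\ (#|[set i | yt i != y i]|%:Z <= budget eps)%R.

Definition cert_robust (eps C : R) (Q : 'M[R]_m) (qt y : 'I_m -> R) (phat : R) : Prop :=
  forall yt a, admissible eps y yt -> svm_opt C Q yt a ->
    0 < Num.sg phat * score qt yt a.

Definition Mu (C : R) (Q : 'M[R]_m) (i : 'I_m) : R := \sum_j C * `|Q i j| - 1.
Definition Mv (C : R) (Q : 'M[R]_m) (i : 'I_m) : R := \sum_j C * `|Q i j| + 1.

Definition milp_feasible (eps C : R) (Q : 'M[R]_m) (y : 'I_m -> R)
  (a yt z u v yp s t : 'I_m -> R) (Rm : 'M[R]_m) : Prop :=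
  is_binary yp /\ is_binary s /\ is_binary t /\
  \sum_i (1 - y i * yt i) <= 2 * (budget eps)%:~R /\
  (forall i, yt i = 2 * yp i - 1) /\
  (forall i, \sum_j Rm i j * Q i j - 1 - u i + v i = 0) /\
  (forall i, 0 <= u i /\ 0 <= v i) /\
  (forall i j, - (C * (1 + yt i)) <= Rm i j + z j <= C * (1 + yt i)) /\
  (forall i j, - (C * (1 - yt i)) <= Rm i j - z j <= C * (1 - yt i)) /\
  (forall i, - a i <= z i <= a i) /\
  (forall i, a i - C * (1 - yt i) <= z i <= C * (1 + yt i) - a i) /\
  (forall i, u i <= Mu C Q i * s i) /\
  (forall i, a i <= C * (1 - s i)) /\
  (forall i, v i <= Mv C Q i * t i) /\
  (forall i, C * t i <= a i).

Definition milp_obj (qt : 'I_m -> R) (phat : R) (z : 'I_m -> R) : R :=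
  Num.sg phat * \sum_i z i * qt i.

Definition milp_opt_value (eps C : R) (Q : 'M[R]_m) (qt y : 'I_m -> R) (phat val : R) : Prop :=
  (exists a yt z u v yp s t Rm,
      milp_feasible eps C Q y a yt z u v yp s t Rm /\ milp_obj qt phat z = val) /\
  (forall a yt z u v yp s t Rm,
      milp_feasible eps C Q y a yt z u v yp s t Rm -> val <= milp_obj qt phat z).

Definition adv_opt_value (eps C : R) (Q : 'M[R]_m) (qt y : 'I_m -> R) (phat val : R) : Prop :=
  (exists yt a, admissible eps y yt /\ svm_opt C Q yt a /\
                Num.sg phat * score qt yt a = val) /\
  (forall yt a, admissible eps y yt -> svm_opt C Q yt a ->
                val <= Num.sg phat * score qt yt a).

End Defs.

(* Main.v *)
Require Import Defs.
From HB Require Import structures.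
From mathcomp Require Import all_boot all_order all_algebra.
From mathcomp Require Import reals.
From mathcomp Require Import ring lra.
From mathcomp Require Import all_classical all_reals all_analysis.
Set Implicit Arguments. Unset Strict Implicit. Unset Printing Implicit Defensive.
Import Order.TTheory GRing.Theory Num.Theory.
Import numFieldNormedType.Exports.
Local Open Scope ring_scope.

Definition bil (R : realType) (m : nat) (Q : 'M[R]_m) (yt a b : 'I_m -> R) : R :=
  \sum_i \sum_j yt i * yt j * a i * b j * Q i j.

Definition grad (R : realType) (m : nat) (Q : 'M[R]_m) (yt a : 'I_m -> R) (i : 'I_m) : R :=
  \sum_j yt i * yt j * a j * Q i j - 1.

Lemma bil_sym (R : realType) (m : nat) (Q : 'M[R]_m) (yt a b : 'I_m -> R) :
  (forall i j, Q i j = Q j i) -> bil Q yt a b = bil Q yt b a.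
Proof.
move=> sQ; rewrite /bil exchange_big /=; apply: eq_bigr => i _; apply: eq_bigr => j _.
by rewrite sQ; ring.
Qed.

Lemma bil_grad (R : realType) (m : nat) (Q : 'M[R]_m) (yt a d : 'I_m -> R) :
  bil Q yt d a = \sum_i d i * (grad Q yt a i + 1).
Proof.
rewrite /bil; apply: eq_bigr => i _; rewrite /grad subrK mulr_sumr.
by apply: eq_bigr => j _; ring.
Qed.

Lemma obj_expand (R : realType) (m : nat) (Q : 'M[R]_m) (yt a b : 'I_m -> R) :
  (forall i j, Q i j = Q j i) ->
  dual_obj Q yt b - dual_obj Q yt a =
  \sum_i (b i - a i) * grad Q yt a i +
  2^-1 * bil Q yt (fun i => b i - a i) (fun i => b i - a i).
Proof.
move=> sQ.
have E : \sum_i \sum_j yt i * yt j * b i * b j * Q i j =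
   bil Q yt a a + bil Q yt a (fun i => b i - a i) + bil Q yt (fun i => b i - a i) a
   + bil Q yt (fun i => b i - a i) (fun i => b i - a i).
  rewrite /bil -!big_split /=; apply: eq_bigr => i _; rewrite -!big_split /=.
  by apply: eq_bigr => j _; ring.
have H2 : bil Q yt a (fun i => b i - a i) = bil Q yt (fun i => b i - a i) a by apply: bil_sym.
have H1 : bil Q yt (fun i => b i - a i) a = \sum_i (b i - a i) * (grad Q yt a i + 1) by apply: bil_grad.
rewrite /dual_obj E H2 H1.
have -> : \sum_i b i = \sum_i a i + \sum_i (b i - a i).
  by rewrite -big_split /=; apply: eq_bigr => i _; ring.
have -> : \sum_i (b i - a i) * (grad Q yt a i + 1) =
   \sum_i (b i - a i) * grad Q yt a i + \sum_i (b i - a i).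
  by rewrite -big_split /=; apply: eq_bigr => i _; ring.
by rewrite /bil /=; field.
Qed.

Lemma bil_psd (R : realType) (m : nat) (Q : 'M[R]_m) (yt d : 'I_m -> R) :
  sym_psd Q -> 0 <= bil Q yt d d.
Proof.
move=> [_ /(_ (fun i => yt i * d i))]; rewrite /bil.
congr (_ <= _); apply: eq_bigr => i _; apply: eq_bigr => j _; ring.
Qed.

Lemma sum_delta (R : realType) (m : nat) (i : 'I_m) (h : R) (F : 'I_m -> R) :
  \sum_k (if k == i then h else 0) * F k = h * F i.
Proof.
rewrite (bigD1 i) //= eqxx big1 ?addr0 // => k /negbTE ->; exact: mul0r.
Qed.

Lemma perturb (R : realType) (m : nat) (C : R) (Q : 'M[R]_m) (yt a : 'I_m -> R) i h :
  (forall i j, Q i j = Q j i) -> svm_opt C Q yt a ->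
  0 <= a i + h <= C ->
  0 <= h * grad Q yt a i + 2^-1 * (yt i * yt i * Q i i * (h * h)).
Proof.
move=> sQ [fa opt] hb.
pose b k := a k + (if k == i then h else 0).
have fb : dual_feasible C b.
  move=> k; rewrite /b; case: eqP => [->|_] //; rewrite addr0; exact: fa.
have := opt b fb; rewrite -subr_ge0 obj_expand //.
have E k : b k - a k = if k == i then h else 0 by rewrite /b; ring.
under eq_bigr do rewrite E.
rewrite sum_delta /bil.
under eq_bigr do under eq_bigr do rewrite !E.
have -> : \sum_i0 \sum_j yt i0 * yt j * (if i0 == i then h else 0) *
      (if j == i then h else 0) * Q i0 j =
   \sum_i0 (if i0 == i then h else 0) * \sum_j (if j == i then h else 0) * (yt i0 * yt j * Q i0 j).
  apply: eq_bigr => k _; rewrite mulr_sumr; apply: eq_bigr => l _; ring.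
under eq_bigr do rewrite sum_delta.
by rewrite sum_delta; congr (_ <= _ + 2^-1 * _); ring.
Qed.

Definition kkt (R : realType) (m : nat) (C : R) (Q : 'M[R]_m) (yt a : 'I_m -> R) :=
  dual_feasible C a /\
  forall i, (a i < C -> 0 <= grad Q yt a i) /\ (0 < a i -> grad Q yt a i <= 0).

Lemma small_step (R : realType) (r g K : R) :
  0 < r -> 0 < g -> 0 <= K ->
  exists h, 0 < h /\ h <= r /\ h * (K + 1) <= g.
Proof.
move=> r0 g0 K0.
have K1 : 0 < K + 1 by lra.
case: (leP r (g / (K + 1))) => H.
  exists r; split => //; split => //.
  by rewrite -(ler_pdivlMr _ _ K1).
exists (g / (K + 1)); split; first by rewrite divr_gt0.
by split; [exact: ltW | rewrite divfK ?gt_eqF].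
Qed.

Lemma opt_kkt (R : realType) (m : nat) (C : R) (Q : 'M[R]_m) (yt a : 'I_m -> R) :
  (forall i j, Q i j = Q j i) -> svm_opt C Q yt a -> kkt C Q yt a.
Proof.
move=> sQ o; split; first by case: o.
move=> i; set g := grad Q yt a i; set c := yt i * yt i * Q i i.
have K0 : 0 <= `|c| by [].
have cle : c <= `|c| by exact: ler_norm.
have [a0 aC] := andP (o.1 i).
split => H; rewrite leNgt; apply/negP => Hg.
- have [h [h0 [h1 h2]]] := small_step (r:=C - a i) (g:=-g) (K:=`|c|) ltac:(lra) ltac:(lra) K0.
  have := perturb sQ o (h:=h) (i:=i) ltac:(apply/andP; split; lra).
  rewrite -/g -/c => P.
  have : c * (h * h) <= `|c| * (h * h) by rewrite ler_pM2r //; nra.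
  nra.
- have [h [h0 [h1 h2]]] := small_step (r:=a i) (g:=g) (K:=`|c|) ltac:(lra) ltac:(lra) K0.
  have := perturb sQ o (h:=-h) (i:=i) ltac:(apply/andP; split; lra).
  rewrite -/g -/c => P.
  have : c * (h * h) <= `|c| * (h * h) by rewrite ler_pM2r //; nra.
  nra.
Qed.

Lemma kkt_opt (R : realType) (m : nat) (C : R) (Q : 'M[R]_m) (yt a : 'I_m -> R) :
  sym_psd Q -> kkt C Q yt a -> svm_opt C Q yt a.
Proof.
move=> sp [fa k]; split => // b fb.
rewrite -subr_ge0 obj_expand; last by case: sp.
apply: addr_ge0; last by apply: mulr_ge0; [lra | exact: bil_psd].
apply: sumr_ge0 => i _.
have [a0 aC] := andP (fa i); have [b0 bC] := andP (fb i).
have [k1 k2] := k i.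
case: (ltgtP (grad Q yt a i) 0) => Hg.
- have : a i = C by apply/eqP; rewrite eq_le aC /=; rewrite leNgt; apply/negP => /k1; lra.
  move=> ->; nra.
- have : a i = 0 by apply/eqP; rewrite eq_le a0 andbT leNgt; apply/negP => /k2; lra.
  move=> ->; nra.
- by rewrite Hg mulr0.
Qed.

Lemma count_diff (R : realType) (m : nat) (y yt : 'I_m -> R) :
  is_label y -> is_label yt ->
  \sum_i (1 - y i * yt i) = 2 * (#|[set i | yt i != y i]|)%:R.
Proof.
move=> ly lyt.
rewrite -sum1_card natr_sum mulr_sumr [RHS]big_mkcond /=; apply: eq_bigr => i _.
rewrite finset.in_set; case: eqP => [->|ne] /=.
  by case: (ly i) => ->; ring.
by case: (ly i) => H; case: (lyt i) => H'; rewrite H H' in ne *; rewrite ?mulr1 //; ring.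
Qed.

Lemma budget_iff (R : realType) (m : nat) (eps : R) (n : nat) :
  ((n%:Z <= budget m eps)%R) <-> (2 * n%:R <= 2 * (budget m eps)%:~R :> R).
Proof.
rewrite ler_pM2l ?ltr0n // -[n%:R]/((n%:Z)%:~R) ler_int; done.
Qed.

Lemma milp_to_adv (R : realType) (m : nat) (eps C : R) (Q : 'M[R]_m) (y : 'I_m -> R)
  (a yt z u v yp s t : 'I_m -> R) (Rm : 'M[R]_m) :
  is_label y -> 0 < C -> sym_psd Q ->
  milp_feasible eps C Q y a yt z u v yp s t Rm ->
  [/\ admissible eps y yt, svm_opt C Q yt a & forall i, z i = yt i * a i].
Proof.
move=> ly C0 sp [byp [bs [bt [hb [hyt [hg [huv [hR1 [hR2 [hz1 [hz2 [hu [has [hv hat]]]]]]]]]]]]]].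
have lyt : is_label yt.
  by move=> i; rewrite hyt; case: (byp i) => ->; [right|left]; ring.
have hz i : z i = yt i * a i.
  have [z1 z2] := andP (hz1 i); have [z3 z4] := andP (hz2 i).
  case: (lyt i) => H; rewrite H in z3 z4 *; lra.
have hRm i j : Rm i j = yt i * z j.
  have [r1 r2] := andP (hR1 i j); have [r3 r4] := andP (hR2 i j).
  case: (lyt i) => H; rewrite H in r1 r2 r3 r4 *; lra.
have fa : dual_feasible C a.
  move=> i; have [z1 z2] := andP (hz1 i); have := has i.
  by case: (bs i) => -> H; apply/andP; split; lra.
split.
- split => //; apply/budget_iff; rewrite -count_diff //.
- apply: kkt_opt => //; split => // i.
  have gE : grad Q yt a i = u i - v i.
    rewrite /grad; have := hg i.
    under eq_bigr do rewrite hRm hz.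
    have -> : \sum_j yt i * (yt j * a j) * Q i j = \sum_j yt i * yt j * a j * Q i j.
      by apply: eq_bigr => j _; ring.
    lra.
  have [u0 v0] := huv i; have := hu i; have := hv i; have := has i; have := hat i.
  have [a0 aC] := andP (fa i).
  rewrite gE; case: (bs i) => ->; case: (bt i) => ->; rewrite ?mulr0 ?mulr1 => *; split => *; lra.
- exact: hz.
Qed.

Lemma grad_bound (R : realType) (m : nat) (C : R) (Q : 'M[R]_m) (yt a : 'I_m -> R) i :
  is_label yt -> dual_feasible C a ->
  `|\sum_j yt i * yt j * a j * Q i j| <= \sum_j C * `|Q i j|.
Proof.
move=> lyt fa; apply: le_trans (ler_norm_sum _ _ _) _; apply: ler_sum => j _.
have [a0 aC] := andP (fa j).
have ny k : `|yt k| = 1 by case: (lyt k) => ->; rewrite ?normrN normr1.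
rewrite !normrM !ny !mul1r (ger0_norm a0); exact: ler_wpM2r.
Qed.

Lemma adv_to_milp (R : realType) (m : nat) (eps C : R) (Q : 'M[R]_m) (y : 'I_m -> R)
  (a yt : 'I_m -> R) :
  is_label y -> 0 < C -> sym_psd Q ->
  admissible eps y yt -> svm_opt C Q yt a ->
  exists z u v yp s t (Rm : 'M[R]_m),
    milp_feasible eps C Q y a yt z u v yp s t Rm /\ forall i, z i = yt i * a i.
Proof.
move=> ly C0 sp [lyt hb] o.
have [fa kk] := opt_kkt (proj1 sp) o.
pose g := grad Q yt a.
exists (fun i => yt i * a i), (fun i => Num.max (g i) 0), (fun i => Num.max (- g i) 0),
  (fun i => (yt i + 1) / 2), (fun i => if 0 < g i then 1 else 0),
  (fun i => if g i < 0 then 1 else 0), (\matrix_(i, j) (yt i * (yt j * a j))).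
split => //.
have ly01 i : yt i = 1 \/ yt i = -1 := lyt i.
have gb i : `|g i + 1| <= \sum_j C * `|Q i j|.
  by rewrite /g /grad subrK; apply: grad_bound.
split; first by move=> i /=; case: (ly01 i) => ->; [right|left]; field.
split; first by move=> i /=; case: ifP; [right|left].
split; first by move=> i /=; case: ifP; [right|left].
split.
  rewrite count_diff //; apply/budget_iff; exact: hb.
split; first by move=> i /=; field.
split.
  move=> i /=.
  have -> : \sum_j (\matrix_(i0, j0) (yt i0 * (yt j0 * a j0))) i j * Q i j = g i + 1.
    rewrite /g /grad subrK; apply: eq_bigr => j _; rewrite mxE; ring.
  by case: (leP (g i) 0) => H; case: (leP (- g i) 0) => H'; lra.
split.
  by move=> i /=; split; [case: (leP (g i) 0) | case: (leP (- g i) 0)] => H; lra.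
have a0 j : 0 <= a j by case/andP: (fa j).
have aC j : a j <= C by case/andP: (fa j).
split.
  move=> i j /=; rewrite mxE; have := a0 j; have := aC j.
  by case: (ly01 i) => ->; case: (ly01 j) => -> *; apply/andP; split; lra.
split.
  move=> i j /=; rewrite mxE; have := a0 j; have := aC j.
  by case: (ly01 i) => ->; case: (ly01 j) => -> *; apply/andP; split; lra.
split.
  move=> i /=; have := a0 i; by case: (ly01 i) => -> *; apply/andP; split; lra.
split.
  move=> i /=; have := a0 i; have := aC i.
  by case: (ly01 i) => -> *; apply/andP; split; lra.
have gl i : - (\sum_j C * `|Q i j|) <= g i + 1 by have := gb i; rewrite ler_norml => /andP[].
have gu i : g i + 1 <= \sum_j C * `|Q i j| by have := gb i; rewrite ler_norml => /andP[].
have k1 i : a i < C -> 0 <= g i by case: (kk i).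
have k2 i : 0 < a i -> g i <= 0 by case: (kk i).
split.
  move=> i /=; rewrite /Mu; have := gl i; have := gu i.
  by case: ifP => H; case: (leP (g i) 0) => H' *; lra.
split.
  move=> i /=; have := a0 i; have := aC i; case: ifP => H * //; last lra.
  case: (ltP 0 (a i)) => H'; first by have := k2 i H'; lra.
  lra.
split.
  move=> i /=; rewrite /Mv; have := gl i; have := gu i.
  by case: ifP => H; case: (leP (- g i) 0) => H' *; lra.
move=> i /=; have := a0 i; have := aC i; case: ifP => H * //; last lra.
case: (ltP (a i) C) => H'; first by have := k1 i H'; lra.
lra.
Qed.
Local Open Scope classical_set_scope.

Lemma cont_sum (R : realType) (m n : nat) (F : 'I_n -> 'rV[R]_m -> R) :
  (forall i, continuous (F i)) -> continuous (fun v => \sum_i F i v).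
Proof.
move=> cF; apply: (@continuous_big _ _ +%R 0 xpredT add_continuous) => i _; exact: cF.
Qed.

Lemma cont_mul (R : realType) (m : nat) (f g : 'rV[R]_m -> R) :
  continuous f -> continuous g -> continuous (fun v => f v * g v).
Proof. move=> cf cg x; exact: (@continuousM R _ f g x (cf x) (cg x)). Qed.

Lemma cont_coord (R : realType) (m : nat) (i : 'I_m) :
  continuous (fun v : 'rV[R]_m => v ord0 i).
Proof. exact: coord_continuous. Qed.

Lemma cont_add (R : realType) (m : nat) (f g : 'rV[R]_m -> R) :
  continuous f -> continuous g -> continuous (fun v => f v + g v).
Proof. move=> cf cg x; exact: (@continuousD R _ _ f g x (cf x) (cg x)). Qed.

Lemma cont_opp (R : realType) (m : nat) (f : 'rV[R]_m -> R) :
  continuous f -> continuous (fun v => - f v).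
Proof. move=> cf x; exact: (@continuousN R _ _ f x (cf x)). Qed.

Lemma cont_cst (R : realType) (m : nat) (c : R) :
  continuous (fun v : 'rV[R]_m => c).
Proof. exact: cst_continuous. Qed.

Lemma closed_pre_le (R : realType) (m : nat) (f : 'rV[R]_m -> R) (c : R) :
  continuous f -> closed [set v | f v <= c].
Proof.
move=> cf; apply: (@preimage_closed _ _ f [set x | x <= c]); last exact: closed_le.
by move=> x _; exact: cf.
Qed.

Lemma closed_pre_ge (R : realType) (m : nat) (f : 'rV[R]_m -> R) (c : R) :
  continuous f -> closed [set v | c <= f v].
Proof.
move=> cf; apply: (@preimage_closed _ _ f [set x | c <= x]); last exact: closed_ge.
by move=> x _; exact: cf.
Qed.

Lemma exists_min (R : realType) (m : nat) (C : R) (Q : 'M[R]_m) (yt qt : 'I_m -> R) (k : R) :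
  (exists a, svm_opt C Q yt a) ->
  exists a, svm_opt C Q yt a /\
    forall b, svm_opt C Q yt b -> k * score qt yt a <= k * score qt yt b.
Proof.
move=> [a0 oa0].
pose f (v : 'rV[R]_m) := fun i => v ord0 i.
pose S := [set v | svm_opt C Q yt (f v)].
have rowK a : f (\row_i a i) = a by apply/funext => i; rewrite /f mxE.
have contF : continuous (fun v => dual_obj Q yt (f v)).
  rewrite /dual_obj; apply: cont_add.
    apply: cont_opp; apply: (@cont_sum R m m (fun i v => v ord0 i)) => i; exact: cont_coord.
  apply: cont_mul; first exact: cont_cst.
  apply: (@cont_sum R m m (fun i v => \sum_j yt i * yt j * v ord0 i * v ord0 j * Q i j)) => i.
  apply: (@cont_sum R m m (fun j v => yt i * yt j * v ord0 i * v ord0 j * Q i j)) => j.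
  repeat apply: cont_mul; (exact: cont_cst || exact: cont_coord).
have contL : continuous (fun v => k * score qt yt (f v)).
  apply: cont_mul; first exact: cont_cst.
  apply: (@cont_sum R m m (fun i v => yt i * v ord0 i * qt i)) => i.
  repeat apply: cont_mul; (exact: cont_cst || exact: cont_coord).
pose B := [set v : 'rV[R]_m | forall i, `[0, C]%classic (v ord0 i)].
have cB : compact B.
  by apply: (@rV_compact R m (fun=> `[0, C]%classic)) => i; exact: segment_compact.
have SB : S `<=` B.
  move=> v [fv _] i /=; rewrite in_itv /=; exact: fv.
have clS : closed S.
  have -> : S = (\bigcap_(i in setT) ([set v : 'rV[R]_m | 0 <= v ord0 i] `&` [set v : 'rV[R]_m | v ord0 i <= C]))
     `&` \bigcap_(b in dual_feasible C) [set v | dual_obj Q yt (f v) <= dual_obj Q yt b].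
    apply/seteqP; split.
      move=> v [fv ov]; split; last by move=> b fb; exact: ov.
      by move=> i _; have /andP[] := fv i.
    move=> v [fv ov]; split; last by move=> b fb; exact: ov.
    by move=> i; have [] := fv i I => ? ?; apply/andP.
  apply: closedI; apply: closed_bigI => i _.
    apply: closedI; [apply: closed_pre_ge | apply: closed_pre_le]; exact: cont_coord.
  exact: closed_pre_le.
have cS : compact S by exact: subclosed_compact clS cB SB.
have S0 : S !=set0 by exists (\row_i a0 i); rewrite /S /= rowK.
have [c cS' minc] := EVT_min_rV S0 cS (continuous_subspaceT contL).
move: cS'; rewrite inE => cS'.
exists (f c); split => // b ob.
have := minc (\row_i b i); rewrite rowK; apply; rewrite inE /S /= rowK //.
Qed.
Local Close Scope classical_set_scope.

Lemma fin_min_rel (R : realType) (T : finType) (P : T -> Prop) (M : T -> R -> Prop) :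
  (forall x v v', M x v -> M x v' -> v = v') ->
  (forall x, P x -> exists v, M x v) -> (exists x, P x) ->
  exists x v, [/\ P x, M x v & forall y v', P y -> M y v' -> v <= v'].
Proof.
move=> hU hM [x0 Px0].
suff H : forall s : seq T, (exists x, x \in s /\ P x) ->
  exists x v, [/\ P x, M x v & forall y v', y \in s -> P y -> M y v' -> v <= v'].
  have x0e : x0 \in enum T by rewrite mem_enum.
  have [x [v [Px Mv Hv]]] := H (enum T) (ex_intro _ x0 (conj x0e Px0)).
  by exists x, v; split => // y v' Py Mv'; apply: (Hv y) => //; rewrite mem_enum.
elim => [[x []] //|h s IH] Hex.
case: (pselect (P h)) => Ph; last first.
  have [x [xs Px]] := Hex; move: xs; rewrite inE => /orP[/eqP xh|xs]; first by rewrite xh in Px.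
  have [x' [v [Px' Mv Hv]]] := IH (ex_intro _ x (conj xs Px)).
  exists x', v; split => // y v' /[!inE] /orP[/eqP ->|ys] Py Mv'; [by case: Ph | exact: (Hv y v' ys Py Mv')].
have [vh Mh] := hM h Ph.
case: (pselect (exists x, x \in s /\ P x)) => Hs; last first.
  exists h, vh; split => // y v' /[!inE] /orP[/eqP ->|ys] Py Mv'.
    by rewrite (hU _ _ _ Mh Mv').
  by case: Hs; exists y.
have [x [v [Px Mv Hv]]] := IH Hs.
case: (leP v vh) => Hle.
  exists x, v; split => // y v' /[!inE] /orP[/eqP ->|ys] Py Mv'; last exact: (Hv y v' ys Py Mv').
  by rewrite -(hU _ _ _ Mh Mv').
exists h, vh; split => // y v' /[!inE] /orP[/eqP ->|ys] Py Mv'.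
  by rewrite (hU _ _ _ Mh Mv').
by apply: le_trans (ltW Hle) (Hv _ _ ys Py Mv').
Qed.

Theorem theorem1 (R : realType) (m : nat) (C eps : R) (y : 'I_m -> R)
    (Q : 'M[R]_m) (qt : 'I_m -> R) (astar : 'I_m -> R) :
  (0 < m)%N -> 0 < C -> 0 <= eps <= 1 ->
  is_label y -> sym_psd Q ->
  svm_opt C Q y astar ->
  score qt y astar != 0 ->
  exists val : R,
    milp_opt_value eps C Q qt y (score qt y astar) val /\
    (cert_robust eps C Q qt y (score qt y astar) <-> 0 < val) /\
    adv_opt_value eps C Q qt y (score qt y astar) val.
Proof.
move=> m0 C0 /andP[e0 e1] ly sp oa _.
set k := Num.sg (score qt y astar).
pose ytb (b : {ffun 'I_m -> bool}) := fun i => if b i then 1 else (-1 : R).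
have ytbK yt : is_label yt -> ytb [ffun i => yt i == 1] = yt.
  move=> lyt; apply/funext => i; rewrite /ytb ffunE.
  by case: (lyt i) => ->; rewrite ?eqxx // (_ : (-1 == 1 :> R) = false) //; apply/negbTE; rewrite eq_sym -subr_eq0 opprK (_ : 1 + 1 = 2 :> R) ?pnatr_eq0 //.
pose P b := admissible eps y (ytb b) /\ exists a, svm_opt C Q (ytb b) a.
pose M b v := exists a, [/\ svm_opt C Q (ytb b) a, k * score qt (ytb b) a = v &
   forall a', svm_opt C Q (ytb b) a' -> v <= k * score qt (ytb b) a'].
have hU b v v' : M b v -> M b v' -> v = v'.
  move=> [a [oa1 <- H1]] [a' [oa2 <- H2]]; apply/eqP; rewrite eq_le H1 // H2 //.
have hM b : P b -> exists v, M b v.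
  move=> [_ ex]; have [a [oa1 H]] := exists_min qt k ex.
  by exists (k * score qt (ytb b) a), a; split.
have adm_y : admissible eps y y.
  split => //; have -> : #|[set i | y i != y i]| = 0%N.
    by apply/eqP; rewrite cards_eq0; apply/eqP/setP => i; rewrite !inE eqxx.
  rewrite /budget floor_ge0; apply: mulr_ge0 => //.
have P0 : exists b, P b.
  exists [ffun i => y i == 1]; rewrite /P ytbK //; split => //; by exists astar.
have [b [v [Pb Mbv Hmin]]] := fin_min_rel hU hM P0.
have low yt a : admissible eps y yt -> svm_opt C Q yt a -> v <= k * score qt yt a.
  move=> ad oa'; have lyt := ad.1.
  have Pb' : P [ffun i => yt i == 1] by rewrite /P ytbK //; split => //; exists a.
  have [v' Mv'] := hM _ Pb'.
  apply: le_trans (Hmin _ _ Pb' Mv') _.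
  by case: Mv' => a0 [_ _ H]; rewrite ytbK // in H; exact: H.
have [a [oab ev _]] := Mbv.
have obj_eq (z yt a' : 'I_m -> R) : (forall i, z i = yt i * a' i) ->
    milp_obj qt (score qt y astar) z = k * score qt yt a'.
  by move=> hz; rewrite /milp_obj /score; congr (_ * _); apply: eq_bigr => i _; rewrite hz.
exists v; split; [|split].
- split.
    have [z [u [vv [yp [s [t [Rm [fe hz]]]]]]]] := adv_to_milp ly C0 sp Pb.1 oab.
    by exists a, (ytb b), z, u, vv, yp, s, t, Rm; split => //; rewrite (obj_eq _ _ _ hz).
  move=> a' yt z u vv yp s t Rm fe.
  have [ad oa' hz] := milp_to_adv ly C0 sp fe.
  by rewrite (obj_eq _ _ _ hz); exact: low.
- split.
    by move=> cr; rewrite -ev; exact: cr Pb.1 oab.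
  by move=> v0 yt a' ad oa'; apply: lt_le_trans v0 (low _ _ ad oa').
- split; last exact: low.
  by exists (ytb b), a; split; [exact: Pb.1 | split].
Qed.
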